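(* Let $A\in\mathcal M(m;\mathbb C)$ and let $\mathcal G_A$ be the set of limit points of the sequence $(A^n)_{n\in\mathbb N}$ (i.e. limits of convergent subsequences). If $\mathcal G_A$ is nonempty, then $\mathcal G_A$ is an abelian compact group under matrix multiplication. *)

(* Defs.v *)
From Stdlib Require Import Reals List.
From mathcomp Require Import ssreflect ssrbool eqtype ssrnat seq fintype.

Set Implicit Arguments.

Local Open Scope R_scope.

Definition C := (R * R)%type.
Definition C0 : C := (0, 0).
Definition C1 : C := (1, 0).
Definition Cadd (x y : C) : C := (fst x + fst y, snd x + snd y).
Definition Cmul (x y : C) : C :=
  (fst x * fst y - snd x * snd y, fst x * snd y + snd x * fst y).

Definition Mat (m : nat) := 'I_m -> 'I_m -> C.

Definition mmul (m : nat) (A B : Mat m) : Mat m :=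
  fun i j => foldr (fun k acc => Cadd (Cmul (A i k) (B k j)) acc) C0 (enum 'I_m).

Definition mid (m : nat) : Mat m := fun i j => if i == j then C1 else C0.

Fixpoint mpow (m : nat) (A : Mat m) (n : nat) : Mat m :=
  match n with
  | O => @mid m
  | S n' => mmul A (mpow A n')
  end.

(* Convergence of a sequence of matrices (entrywise, real and imaginary parts;
   this is the usual topology of C^(m*m)). *)
Definition mat_cv (m : nat) (u : nat -> Mat m) (L : Mat m) : Prop :=
  forall i j, Un_cv (fun n => fst (u n i j)) (fst (L i j)) /\
              Un_cv (fun n => snd (u n i j)) (snd (L i j)).

Definition limit_points (m : nat) (A : Mat m) : Mat m -> Prop :=
  fun L => exists phi : nat -> nat,
    (forall n, Nat.lt (phi n) (phi (S n))) /\ mat_cv (fun n => mpow A (phi n)) L.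

(* Open sets of M(m;C) (for the box metric, equivalent to any norm). *)
Definition mat_open (m : nat) (U : Mat m -> Prop) : Prop :=
  forall X, U X -> exists eps, 0 < eps /\
    forall Y, (forall i j, Rabs (fst (Y i j) - fst (X i j)) < eps /\
                           Rabs (snd (Y i j) - snd (X i j)) < eps) -> U Y.

Definition mat_compact (m : nat) (K : Mat m -> Prop) : Prop :=
  forall (I : Type) (U : I -> Mat m -> Prop),
    (forall a, mat_open (U a)) ->
    (forall X, K X -> exists a, U a X) ->
    exists l : list I, forall X, K X -> exists a, List.In a l /\ U a X.

(* G is an abelian group under matrix multiplication (its identity element
   need not be the identity matrix). *)
Definition abelian_group_mul (m : nat) (G : Mat m -> Prop) : Prop :=
  (forall X Y, G X -> G Y -> G (mmul X Y)) /\
  (forall X Y Z, G X -> G Y -> G Z -> mmul X (mmul Y Z) = mmul (mmul X Y) Z) /\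
  exists E, G E /\
    (forall X, G X -> mmul E X = X /\ mmul X E = X) /\
    (forall X, G X -> exists Y, G Y /\ mmul X Y = E /\ mmul Y X = E) /\
    (forall X Y, G X -> G Y -> mmul X Y = mmul Y X).

(* Main.v *)
Require Import Defs.
From Stdlib Require Import Reals List.
From mathcomp Require Import ssreflect ssrbool eqtype ssrnat seq fintype.
From Stdlib Require Import Lra Lia FunctionalExtensionality IndefiniteDescription.
From Stdlib Require Import Classical.
From mathcomp Require Import all_boot all_order all_algebra complex Rstruct spectral ring.

Module W1.
Set Implicit Arguments. Unset Strict Implicit. Unset Printing Implicit Defensive.
Import Order.TTheory GRing.Theory Num.Theory.
Local Open Scope ring_scope.

Notation CC := (Rdefinitions.R[i]).

Definition mnorm m n (X : 'M[CC]_(m, n)) : CC := \sum_i \sum_j `|X i j|.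

Lemma mnorm_ge0 m n (X : 'M[CC]_(m, n)) : 0 <= mnorm X.
Proof. by apply: sumr_ge0 => i _; apply: sumr_ge0. Qed.

Lemma mnorm_entry m n (X : 'M[CC]_(m, n)) i j : `|X i j| <= mnorm X.
Proof.
rewrite /mnorm (bigD1 i) //= (bigD1 j) //= -addrA lerDl.
apply: addr_ge0; first by apply: sumr_ge0.
by apply: sumr_ge0 => ? _; apply: sumr_ge0.
Qed.

Lemma mnormD m n (X Y : 'M[CC]_(m, n)) : mnorm (X + Y) <= mnorm X + mnorm Y.
Proof.
rewrite /mnorm -big_split /=; apply: ler_sum => i _.
rewrite -big_split /=; apply: ler_sum => j _; rewrite mxE; exact: ler_normD.
Qed.

Lemma mnormN m n (X : 'M[CC]_(m, n)) : mnorm (- X) = mnorm X.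
Proof. by apply: eq_bigr => i _; apply: eq_bigr => j _; rewrite mxE normrN. Qed.

Lemma mnormZ m n c (X : 'M[CC]_(m, n)) : mnorm (c *: X) = `|c| * mnorm X.
Proof.
rewrite /mnorm mulr_sumr; apply: eq_bigr => i _; rewrite mulr_sumr.
by apply: eq_bigr => j _; rewrite mxE normrM.
Qed.

Lemma mnorm0 m n : mnorm (0 : 'M[CC]_(m, n)) = 0.
Proof. by rewrite /mnorm big1 // => i _; rewrite big1 // => j _; rewrite mxE normr0. Qed.

Lemma mnorm_eq0 m n (X : 'M[CC]_(m, n)) : mnorm X = 0 -> X = 0.
Proof.
move=> H; apply/matrixP => i j; rewrite mxE; apply/eqP; rewrite -normr_eq0.
by rewrite eq_le normr_ge0 andbT -H mnorm_entry.
Qed.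

Lemma mnormM m n p (X : 'M[CC]_(m, n)) (Y : 'M[CC]_(n, p)) :
  mnorm (X *m Y) <= mnorm X * mnorm Y.
Proof.
rewrite /mnorm mulr_suml; apply: ler_sum => i _.
apply: (@le_trans _ _ (\sum_j \sum_k `|X i k| * `|Y k j|)).
  apply: ler_sum => j _; rewrite mxE.
  by apply: (le_trans (ler_norm_sum _ _ _)); apply: ler_sum => k _; rewrite normrM.
rewrite exchange_big /= mulr_suml; apply: ler_sum => k _.
rewrite -mulr_sumr; apply: ler_wpM2l => //.
rewrite (bigD1 k) //= lerDl; by apply: sumr_ge0 => ? _; apply: sumr_ge0.
Qed.


Definition mxpow n (A : 'M[CC]_n) k := iter k (mulmx A) 1%:M.
Arguments mxpow : simpl never.
Lemma mxpow0 n (A : 'M[CC]_n) : mxpow A 0 = 1%:M. Proof. by []. Qed.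

Lemma mxpowS n (A : 'M[CC]_n) k : mxpow A k.+1 = A *m mxpow A k.
Proof. by []. Qed.

Lemma mxpowSr n (A : 'M[CC]_n) k : mxpow A k.+1 = mxpow A k *m A.
Proof.
elim: k => [|k IH]; first by rewrite mxpowS mxpow0 mulmx1 mul1mx.
by rewrite {1}mxpowS {1}IH mulmxA -mxpowS.
Qed.

Lemma mxpowD n (A : 'M[CC]_n) k l : mxpow A (k + l) = mxpow A k *m mxpow A l.
Proof. elim: k => [|k IH]; first by rewrite mul1mx. by rewrite addSn mxpowS IH mulmxA. Qed.

Lemma mxpow_conj n (A Q Q' : 'M[CC]_n) k : Q *m Q' = 1%:M -> Q' *m Q = 1%:M ->
  mxpow (Q *m A *m Q') k = Q *m mxpow A k *m Q'.
Proof.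
move=> H1 H2; elim: k => [|k IH]; first by rewrite !mxpow0 mulmx1 H1.
rewrite [LHS]mxpowS IH [in RHS]mxpowS !mulmxA; congr (_ *m _).
by rewrite -(mulmxA _ Q' Q) H2 mulmx1.
Qed.

Lemma mxpow_tr n (A : 'M[CC]_n) k : mxpow A^T k = (mxpow A k)^T.
Proof.
elim: k => [|k IH]; first by rewrite !mxpow0 trmx1.
by rewrite mxpowS mxpowSr IH trmx_mul.
Qed.

Lemma mnorm_tr m n (X : 'M[CC]_(m, n)) : mnorm X^T = mnorm X.
Proof. rewrite /mnorm exchange_big; apply: eq_bigr => i _; apply: eq_bigr => j _; by rewrite mxE. Qed.

Definition pbnd n (A : 'M[CC]_n) (p : nat -> nat) :=
  exists K : CC, forall k, mnorm (mxpow A (p k)) <= K.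

Lemma pbnd_conj n (A Q Q' : 'M[CC]_n) p : Q *m Q' = 1%:M -> Q' *m Q = 1%:M ->
  pbnd A p -> pbnd (Q *m A *m Q') p.
Proof.
move=> H1 H2 [K HK]; exists (mnorm Q * K * mnorm Q') => k.
rewrite mxpow_conj //; apply: (le_trans (mnormM _ _)).
apply: ler_wpM2r; first exact: mnorm_ge0.
apply: (le_trans (mnormM _ _)); apply: ler_wpM2l => //; exact: mnorm_ge0.
Qed.

Lemma pbnd_tr n (A : 'M[CC]_n) p : pbnd A p -> pbnd A^T p.
Proof. by move=> [K HK]; exists K => k; rewrite mxpow_tr mnorm_tr. Qed.

Lemma mnorm_block m1 m2 n1 n2 (a : 'M[CC]_(m1, n1)) (b : 'M_(m1, n2)) (c : 'M_(m2, n1)) (d : 'M_(m2, n2)) :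
  mnorm (block_mx a b c d) = mnorm a + mnorm b + (mnorm c + mnorm d).
Proof.
rewrite /mnorm big_split_ord /=.
have E1 : forall i, \sum_j `|block_mx a b c d (lshift m2 i) j| = \sum_j `|a i j| + \sum_j `|b i j|.
  by move=> i; rewrite big_split_ord /=; congr (_ + _); apply: eq_bigr => j _; rewrite ?block_mxEul ?block_mxEur.
have E2 : forall i, \sum_j `|block_mx a b c d (rshift m1 i) j| = \sum_j `|c i j| + \sum_j `|d i j|.
  by move=> i; rewrite big_split_ord /=; congr (_ + _); apply: eq_bigr => j _; rewrite ?block_mxEdl ?block_mxEdr.
rewrite (eq_bigr _ (fun i _ => E1 i)) (eq_bigr _ (fun i _ => E2 i)).
by rewrite !big_split.
Qed.

Fixpoint rr m (l : CC) (b : 'M[CC]_(1, m)) (d : 'M[CC]_m) k : 'M[CC]_(1, m) :=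
  match k with 0 => 0 | k'.+1 => l *: rr l b d k' + b *m mxpow d k' end.

Lemma block_pow m (l : CC) (b : 'M[CC]_(1, m)) (d : 'M[CC]_m) k :
  @mxpow (1 + m) (block_mx l%:M b 0 d) k = block_mx (l ^+ k)%:M (rr l b d k) 0 (mxpow d k).
Proof.
elim: k => [|k IH]; first by rewrite !mxpow0 expr0 -scalar_mx_block.
rewrite mxpowS IH mulmx_block !mul0mx !mulmx0 !addr0 !add0r mul_scalar_mx.
by rewrite scale_scalar_mx -exprS mul_scalar_mx [in RHS]mxpowS.
Qed.


Lemma arch_zero (c K : CC) (p : nat -> nat) : (forall k : nat, (k <= p k)%N) -> 0 <= c ->
  (forall k, (p k)%:R * c <= K) -> c = 0.
Proof.
move=> Hp Hc HK.
have Ic := ger0_Im Hc.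
have E : c = (complex.Re c)%:C%C by case: c Ic Hc {HK} => a b /= ->.
move: Hc; rewrite E ler0c => Hc.
have H2 : forall k, (p k)%:R * complex.Re c <= complex.Re K.
  move=> k; move: (HK k); rewrite E lecE => /andP [_].
  have -> : ((p k)%:R : CC) = ((p k)%:R : Rdefinitions.R)%:C%C by rewrite rmorph_nat.
  by rewrite -rmorphM.
have HK0 : 0 <= complex.Re K by apply: le_trans (H2 0%N); apply: mulr_ge0.
case: (ltgtP (complex.Re c) 0) => [|Hpos|Hz]; first by rewrite ltNge Hc.
  exfalso.
  have := archi_boundP (divr_ge0 HK0 Hc).
  set k := Num.bound _ => Hk.
  have : complex.Re K < (p k)%:R * complex.Re c.
    rewrite -ltr_pdivrMr //; apply: (lt_le_trans Hk); by rewrite ler_nat.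
  by rewrite ltNge H2.
by rewrite E Hz.
Qed.


Lemma decomp n (S : 'M[CC]_n) (Ks : CC) : (forall k, mnorm (mxpow S k) <= Ks) ->
  forall b : 'M[CC]_(1, n), exists b0 y, b0 *m S = b0 /\ b = b0 + y *m (1%:M - S).
Proof.
move=> HS b.
set N := 1%:M - S.
set W := (kermx N :&: N)%MS.
have WN : W *m N = 0 by apply/sub_kermxP; exact: capmxSl.
have [D HD] : exists D, W = D *m N by apply/submxP; exact: capmxSr.
have WS : W *m S = W.
  by move: WN; rewrite /N mulmxBr mulmx1 => /eqP; rewrite subr_eq0 => /eqP <-.
have DS : forall k, D *m mxpow S k = D - W *+ k.
  elim=> [|k IH]; first by rewrite mxpow0 mulmx1 mulr0n subr0.
  rewrite mxpowSr mulmxA IH mulmxBl -scaler_nat -scalemxAl scaler_nat WS.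
  have -> : D *m S = D - W by rewrite HD /N mulmxBr mulmx1 opprB addrC subrK.
  by rewrite mulrSr opprD addrA [RHS]addrAC.
have W0 : W = 0.
  apply: mnorm_eq0.
  apply: (@arch_zero _ (mnorm D + mnorm D * Ks) id) => //; first exact: mnorm_ge0.
  move=> k; rewrite /= -[X in X * _]normr_nat -mnormZ scaler_nat.
  have -> : W *+ k = D - D *m mxpow S k by rewrite DS opprB addrC subrK.
  apply: (le_trans (mnormD _ _)); rewrite mnormN; apply: lerD => //.
  apply: (le_trans (mnormM _ _)); apply: ler_wpM2l => //; exact: mnorm_ge0.
have full : row_full (kermx N + N)%MS.
  rewrite /row_full; apply/eqP.
  have := mxrank_sum_cap (kermx N) N; rewrite -/W W0 mxrank0 addn0 => ->.
  by rewrite mxrank_ker subnK // rank_leq_row.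
have /sub_addsmxP [u Hu] := submx_full b full.
exists (u.1 *m kermx N), u.2; split => //.
apply/eqP; rewrite -subr_eq0 -{2}(mulmx1 (u.1 *m kermx N)).
by rewrite -mulmxBr -opprB mulmxN -mulmxA mulmx_ker mulmx0 oppr0.
Qed.


Lemma bern (x : CC) n : 1 <= x -> 1 + n%:R * (x - 1) <= x ^+ n.
Proof.
move=> Hx; have x0 : 0 <= x by apply: le_trans Hx.
elim: n => [|n IH]; first by rewrite mul0r addr0 expr0.
apply: (@le_trans _ _ (x * (1 + n%:R * (x - 1)))); last by rewrite exprS ler_wpM2l.
rewrite -subr_ge0.
have -> : x * (1 + n%:R * (x - 1)) - (1 + n.+1%:R * (x - 1)) = n%:R * ((x - 1) * (x - 1)).
  by rewrite -addn1 natrD; ring.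
apply: mulr_ge0 => //; apply: mulr_ge0; by rewrite subr_ge0.
Qed.

Lemma mnorm_scal1 (x : CC) : mnorm (x%:M : 'M_1) = `|x|.
Proof. by rewrite /mnorm !big_ord1 mxE eqxx mulr1n. Qed.

Lemma mxpowZ n (c : CC) (d : 'M[CC]_n) k : mxpow (c *: d) k = c ^+ k *: mxpow d k.
Proof.
elim: k => [|k IH]; first by rewrite !mxpow0 expr0 scale1r.
by rewrite !mxpowS IH -scalemxAl -scalemxAr scalerA exprS.
Qed.

Definition utri n (T : 'M[CC]_n) := forall i j : 'I_n, (j < i)%N -> T i j = 0.

Lemma pbnd0 (T : 'M[CC]_0) p : pbnd T p.
Proof. by exists 0 => k; rewrite /mnorm big_ord0. Qed.

Lemma sum_bnd n (b : 'M[CC]_(1, n)) (S : 'M[CC]_n) (b0 y : 'M[CC]_(1, n)) k :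
  b0 *m S = b0 -> b = b0 + y *m (1%:M - S) ->
  \sum_(i < k) b *m mxpow S i = b0 *+ k + y - y *m mxpow S k.
Proof.
move=> Hb0 Hb; elim: k => [|k IH]; first by rewrite big_ord0 mulr0n add0r mxpow0 mulmx1 subrr.
rewrite big_ord_recr /= IH Hb mulmxDl.
have -> : b0 *m mxpow S k = b0.
  by elim: k {IH} => [|k IHk]; rewrite ?mxpow0 ?mulmx1 // mxpowSr mulmxA IHk.
rewrite -mulmxA mulmxBl mul1mx -mxpowS mulmxBr mulrS.
set u := y *m mxpow S k; set v := y *m mxpow S k.+1.
rewrite -addrA (addrCA (- u)) addKr addrA; congr (_ - v); by rewrite addrC addrA.
Qed.

Lemma rr_U m (l : CC) (b : 'M[CC]_(1, m)) (d : 'M[CC]_m) k : l != 0 ->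
  l *: rr l b d k = l ^+ k *: \sum_(i < k) b *m mxpow (l^-1 *: d) i.
Proof.
move=> l0; elim: k => [|k IH]; first by rewrite big_ord0 !scaler0.
rewrite /= scalerDr IH big_ord_recr /= scalerDr scalerA -exprS; congr (_ + _).
rewrite mxpowZ -scalemxAr scalerA; congr (_ *: _).
by rewrite exprS -mulrA -exprMn mulfV // expr1n mulr1.
Qed.

Lemma tri_bnd n : forall (T : 'M[CC]_n) p, utri T -> (forall k, p k < p k.+1)%N ->
  pbnd T p -> pbnd T id.
Proof.
elim: n => [|n IHn] T p HT Hp [K HK]; first exact: pbnd0.
have Hpk : forall k, (k <= p k)%N.
  by elim=> [|k IH] //; apply: leq_ltn_trans IH (Hp k).
pose T' : 'M[CC]_(1 + n) := T.
have HT' : utri T' := HT.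
set l := T' 0 0; set b := ursubmx T'; set d := drsubmx T'.
have ET : T' = block_mx l%:M b 0 d.
  rewrite -{1}(submxK T'); congr block_mx.
    apply/matrixP => i j; rewrite !ord1 !mxE /= mulr1n /l; congr (T' _ _); exact: val_inj.
  apply/matrixP => i j; rewrite !mxE [j]ord1; apply: HT' => /=; by rewrite add1n.
have Hd : utri d by move=> i j ij; rewrite !mxE; apply: HT' => /=; rewrite !add1n ltnS.
have Pw : forall k, @mxpow (1 + n) T' k = block_mx (l ^+ k)%:M (rr l b d k) 0 (mxpow d k).
  by move=> k; rewrite -block_pow -ET.
have Nw : forall k, mnorm (@mxpow (1 + n) T' k) = `|l| ^+ k + mnorm (rr l b d k) + mnorm (mxpow d k).
  move=> k; rewrite Pw mnorm_block mnorm_scal1 mnorm0 add0r normrX //.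
have K0 : 0 <= K by apply: le_trans (HK 0%N); exact: mnorm_ge0.
have Hl : forall k, `|l| ^+ (p k) <= K.
  move=> k; apply: le_trans (HK k); rewrite Nw -addrA lerDl.
  by apply: addr_ge0; exact: mnorm_ge0.
have Hr : forall k, mnorm (rr l b d (p k)) <= K.
  move=> k; apply: le_trans (HK k); rewrite Nw (addrC (_ ^+ _)) -addrA lerDl.
  by apply: addr_ge0; [apply: exprn_ge0 | exact: mnorm_ge0].
have [Kd HKd] : pbnd d id.
  apply: (IHn d p Hd Hp); exists K => k; apply: le_trans (HK k); rewrite Nw lerDr.
  by apply: addr_ge0; [apply: exprn_ge0 | exact: mnorm_ge0].
have Kd0 : 0 <= Kd by apply: le_trans (HKd 0%N); exact: mnorm_ge0.
suff [M HM] : exists M, (forall k, `|l| ^+ k <= 1) /\ (forall k, mnorm (rr l b d k) <= M).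
  exists (1 + M + Kd) => k; change (mnorm (@mxpow (1 + n) T' k) <= 1 + M + Kd); rewrite Nw; apply: lerD => //; apply: lerD; by case: HM.
case: (real_ltgtP (normr_real l) (@real1 _)) => Hl1.
-
  have l1 : 0 < 1 - `|l| by rewrite subr_gt0.
  exists (mnorm b * Kd / (1 - `|l|)); split.
    by move=> k; apply: exprn_ile1 => //; apply: ltW.
  elim=> [|k IH]; first by rewrite mnorm0; apply: divr_ge0; [apply: mulr_ge0 => //; exact: mnorm_ge0 | exact: ltW].
  rewrite /=; apply: (le_trans (mnormD _ _)); rewrite mnormZ.
  set M := mnorm b * Kd / (1 - `|l|).
  have EM : M = `|l| * M + mnorm b * Kd.
    rewrite /M.
    have : 1 - `|l| != 0 by apply: lt0r_neq0.
    move=> nz; field; exact: nz.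
  rewrite [X in _ <= X]EM; apply: lerD; first by apply: ler_wpM2l.
  apply: (le_trans (mnormM _ _)); apply: ler_wpM2l => //; exact: mnorm_ge0.
-
  exfalso.
  have c0 : 0 <= `|l| - 1 by rewrite subr_ge0 ltW.
  have := @arch_zero (`|l| - 1) K p Hpk c0.
  have H : forall k, (p k)%:R * (`|l| - 1) <= K.
    move=> k; apply: le_trans (Hl k); apply: le_trans (bern _ (ltW Hl1)).
    by rewrite lerDr.
  move=> /(_ H) /eqP; rewrite subr_eq0 => /eqP E.
  by move: Hl1; rewrite E ltxx.
-
  have l0 : l != 0 by rewrite -normr_eq0 Hl1 oner_eq0.
  set S := l^-1 *: d.
  have HS : forall k, mnorm (mxpow S k) <= Kd.
    move=> k; rewrite /S mxpowZ mnormZ normrX normfV Hl1 invr1 expr1n mul1r; exact: HKd.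
  have [b0 [y [Hb0 Hb]]] := decomp HS b.
  have EU : forall k, mnorm (rr l b d k) = mnorm (\sum_(i < k) b *m mxpow S i).
    move=> k; have := congr1 (@mnorm _ _) (rr_U b d k l0).
    by rewrite !mnormZ normrX Hl1 expr1n !mul1r.
  have Ky : forall k, mnorm (y - y *m mxpow S k) <= mnorm y + mnorm y * Kd.
    move=> k; apply: (le_trans (mnormD _ _)); rewrite mnormN; apply: lerD => //.
    apply: (le_trans (mnormM _ _)); apply: ler_wpM2l => //; exact: mnorm_ge0.
  have b00 : b0 = 0.
    apply: mnorm_eq0; apply: (@arch_zero _ (K + (mnorm y + mnorm y * Kd)) p Hpk); first exact: mnorm_ge0.
    move=> k; rewrite -[X in X * _]normr_nat -mnormZ scaler_nat.
    have -> : b0 *+ p k = \sum_(i < p k) b *m mxpow S i - (y - y *m mxpow S (p k)).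
      by rewrite (sum_bnd (p k) Hb0 Hb) -[b0 *+ _ + y - _]addrA addrK.
    apply: (le_trans (mnormD _ _)); rewrite mnormN; apply: lerD => //.
    by rewrite -EU.
  exists (mnorm y + mnorm y * Kd); split.
    by move=> k; rewrite Hl1 expr1n.
  move=> k; rewrite EU (sum_bnd k Hb0 Hb) b00 mul0rn add0r; exact: Ky.
Qed.

Lemma bnd_main n (A : 'M[CC]_n) p : (forall k, p k < p k.+1)%N -> pbnd A p -> pbnd A id.
Proof.
case: n A => [|n] A Hp HA; first exact: pbnd0.
have [P Pu Ptr] := Schur A (ltn0Sn n).
have Pi : P \in unitmx by exact: unitarymx_unit.
move: Ptr; rewrite /similar_to /conjmx pinvmxE // => /is_trig_mxP Ht.
set L := P *m A *m invmx P.
have HL : pbnd L p by apply: pbnd_conj => //; [exact: mulmxV | exact: mulVmx].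
have HLT : pbnd L^T id.
  apply: (tri_bnd (p := p)) => //; last exact: pbnd_tr.
  by move=> i j ij; rewrite mxE; apply: Ht.
have HL' : pbnd L id by move: (pbnd_tr HLT); rewrite trmxK.
have -> : A = invmx P *m L *m P.
  by rewrite /L !mulmxA mulVmx // mul1mx -mulmxA mulVmx // mulmx1.
by apply: pbnd_conj => //; [exact: mulVmx | exact: mulmxV].
Qed.

End W1.
Import W1.

Module W2.
Set Implicit Arguments. Unset Strict Implicit. Unset Printing Implicit Defensive.
Import Order.TTheory GRing.Theory Num.Theory.

Section Bridge.
Local Open Scope ring_scope.

Definition toC (z : Defs.C) : CC := Complex (fst z) (snd z).
Definition toM m (X : Mat m) : 'M[CC]_m := \matrix_(i, j) toC (X i j).

Lemma toC_add x y : toC (Cadd x y) = toC x + toC y.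
Proof. by []. Qed.
Lemma toC_mul x y : toC (Cmul x y) = toC x * toC y.
Proof. by []. Qed.

Lemma toM_mul m (X Y : Mat m) : toM (mmul X Y) = toM X *m toM Y.
Proof.
apply/matrixP => i j; rewrite !mxE /mmul.
have -> : \sum_j0 toM X i j0 * toM Y j0 j = \sum_(k <- enum 'I_m) toC (Cmul (X i k) (Y k j)).
  by rewrite enumT; apply: eq_bigr => k _; rewrite !mxE.
elim: (enum 'I_m) => [|k s IH]; first by rewrite big_nil.
by rewrite big_cons /= toC_add IH.
Qed.

Lemma toM_id m : toM (@mid m) = 1%:M.
Proof. by apply/matrixP => i j; rewrite !mxE /mid; case: (i == j). Qed.

Lemma toM_pow m (A : Mat m) n : toM (mpow A n) = mxpow (toM A) n.
Proof.
elim: n => [|n IH]; first by rewrite mxpow0 /= toM_id.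
by rewrite /= toM_mul IH mxpowS.
Qed.

Lemma toM_inj m (X Y : Mat m) : toM X = toM Y -> X = Y.
Proof.
move=> H; apply: functional_extensionality => i; apply: functional_extensionality => j.
have := congr1 (fun M : 'M[CC]_m => M i j) H; rewrite /= !mxE /toC.
by case: (X i j) => a b; case: (Y i j) => c d /= [-> ->].
Qed.

End Bridge.

Section Bridge2.
Local Open Scope ring_scope.

Lemma normC_real (r : Rdefinitions.R) : `|(r%:C)%C : CC| = (`|r|%:C)%C.
Proof. by rewrite normc_def /= expr0n addr0 sqrtr_sqr. Qed.

Lemma norm_i : `|('i)%C : CC| = 1.
Proof. by rewrite normc_def /= expr0n add0r expr1n sqrtr1. Qed.

Lemma normC_le (z : Defs.C) : `|toC z| <= ((`|fst z| + `|snd z|)%:C)%C.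
Proof.
rewrite [toC z]complexE rmorphD /=; apply: (le_trans (ler_normD _ _)).
by rewrite normrM norm_i mul1r !normC_real.
Qed.

Lemma Re_le (z : Defs.C) : (`|fst z|%:C)%C <= `|toC z|.
Proof. exact: (normc_ge_Re (toC z)). Qed.

Lemma Im_le (z : Defs.C) : (`|snd z|%:C)%C <= `|toC z|.
Proof.
have := normc_ge_Re (toC z * 'i%C); rewrite ReiNIm normrN normrM norm_i mulr1.
by [].
Qed.

End Bridge2.

Definition ebnd m (u : nat -> Mat m) (K : R) := forall n i j,
  Rle (Rabs (fst (u n i j))) K /\ Rle (Rabs (snd (u n i j))) K.

Lemma bnd_bridge m (A : Mat m) (phi : nat -> nat) : (forall n, (phi n < phi (S n))%N) ->
  (exists K, ebnd (fun n => mpow A (phi n)) K) -> exists K, ebnd (mpow A) K.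
Proof.
move=> Hphi [Kr HKr].
have HP : pbnd (toM A) phi.
  exists (\sum_(i < m) \sum_(j < m) ((Kr + Kr)%:C)%C)%R => k.
  rewrite /mnorm -toM_pow.
  apply: ler_sum => i _.
  apply: ler_sum => j _; rewrite mxE; apply: (le_trans (normC_le _)).
  rewrite lecR; have [H1 H2] := HKr k i j.
  by apply: lerD; apply/RleP; [exact: H1 | exact: H2].
have [K HK] := bnd_main Hphi HP.
exists (complex.Re K) => n i j.
have HE : (`|toC (mpow A n i j)| <= K)%R.
  have := mnorm_entry (toM (mpow A n)) i j; rewrite mxE => H.
  by apply: (le_trans H); rewrite toM_pow; exact: HK.
have := le_trans (Re_le (mpow A n i j)) HE; rewrite lecE => /andP [_ H1].
have := le_trans (Im_le (mpow A n i j)) HE; rewrite lecE => /andP [_ H2].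
by split; apply/RleP.
Qed.

Lemma mmulA m (X Y Z : Mat m) : mmul X (mmul Y Z) = mmul (mmul X Y) Z.
Proof. by apply: toM_inj; rewrite !toM_mul mulmxA. Qed.

Lemma mpow_add m (A : Mat m) a b : mpow A (a + b) = mmul (mpow A a) (mpow A b).
Proof. by apply: toM_inj; rewrite toM_mul !toM_pow mxpowD. Qed.

End W2.
Import W2.

Module W3.
Set Implicit Arguments.

Section W3.
Local Open Scope R_scope.

Lemma cv_bnd (u : nat -> R) l : Un_cv u l -> exists K, forall n, Rabs (u n) <= K.
Proof.
move=> H; have [N HN] := H 1 Rlt_0_1.
have : exists K, forall n, (n <= N)%coq_nat -> Rabs (u n) <= K.
  elim: N {HN} => [|N [K HK]].
    exists (Rabs (u 0%nat)) => n Hn; have -> : n = 0%nat by lia. lra.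
  exists (Rmax K (Rabs (u (S N)))) => n Hn.
  case: (Nat.eq_dec n (S N)) => [->|Hne]; first by apply: Rmax_r.
  apply: Rle_trans (Rmax_l _ _); apply: HK; lia.
move=> [K HK]; exists (Rmax K (Rabs l + 1)) => n.
case: (Compare_dec.le_lt_dec n N) => Hn; first by apply: Rle_trans (Rmax_l _ _); apply: HK.
apply: Rle_trans (Rmax_r _ _).
have := HN n (ltac:(lia)); rewrite /R_dist => H1.
have := Rabs_triang_inv (u n) l; lra.
Qed.

Lemma cv_le_bnd (u : nat -> R) l K : Un_cv u l -> (forall n, Rabs (u n) <= K) -> Rabs l <= K.
Proof.
move=> H HK; apply: Rnot_lt_le => Hlt.
have [N HN] := H (Rabs l - K) ltac:(lra).
have := HN N (le_n _); rewrite /R_dist => H1.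
have := HK N; have := Rabs_triang_inv l (u N); rewrite Rabs_minus_sym; lra.
Qed.

Definition incr (f : nat -> nat) := forall n, Nat.lt (f n) (f (S n)).

Lemma incr_ge f : incr f -> forall n, (n <= f n)%coq_nat.
Proof. move=> Hf; elim=> [|n IH]; first lia. have := Hf n; lia. Qed.

Lemma incr_lt f : incr f -> forall a b, (a < b)%coq_nat -> (f a < f b)%coq_nat.
Proof.
move=> Hf a b; elim: b => [|b IH] Hab; first lia.
case: (Nat.eq_dec a b) => [->|Hne]; first exact: Hf.
have := Hf b; have := IH ltac:(lia); lia.
Qed.

Lemma incr_le f : incr f -> forall a b, (a <= b)%coq_nat -> (f a <= f b)%coq_nat.
Proof.
move=> Hf a b Hab; case: (Nat.eq_dec a b) => [->|Hne]; first lia.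
have := incr_lt Hf (ltac:(lia) : (a < b)%coq_nat); lia.
Qed.

Lemma incr_comp f g : incr f -> incr g -> incr (fun n => f (g n)).
Proof. move=> Hf Hg n; apply: incr_lt => //; exact: Hg. Qed.

Lemma cv_sub (u : nat -> R) l f : incr f -> Un_cv u l -> Un_cv (fun n => u (f n)) l.
Proof.
move=> Hf H eps He; have [N HN] := H eps He; exists N => n Hn.
apply: HN; have := incr_ge Hf n; lia.
Qed.


Lemma in_seqIn (T : eqType) (s : seq T) x : x \in s -> In x s.
Proof.
elim: s => [|y s IH] //=; rewrite in_cons => /orP [/eqP ->|H]; [by left | right; exact: IH].
Qed.

Lemma In_enum (T : finType) (x : T) : In x (enum T).
Proof. apply: in_seqIn; by rewrite mem_enum. Qed.

Lemma fin_unif_nat (T : Type) (l : list T) (P : T -> nat -> Prop) :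
  (forall t a b, (a <= b)%coq_nat -> P t a -> P t b) ->
  (forall t, In t l -> exists N, P t N) -> exists N, forall t, In t l -> P t N.
Proof.
move=> Hm; elim: l => [|x l IH] H; first by exists 0%nat.
have [N1 H1] := H x (or_introl erefl).
have [N2 H2] := IH (fun t Ht => H t (or_intror Ht)).
exists (Nat.max N1 N2) => t [<-|Ht]; first by apply: Hm H1; lia.
by apply: Hm (H2 t Ht); lia.
Qed.

Lemma fin_unif_R (T : Type) (l : list T) (P : T -> R -> Prop) :
  (forall t a b, a <= b -> P t a -> P t b) ->
  (forall t, In t l -> exists N, P t N) -> exists N, forall t, In t l -> P t N.
Proof.
move=> Hm; elim: l => [|x l IH] H; first by exists 0.
have [N1 H1] := H x (or_introl erefl).
have [N2 H2] := IH (fun t Ht => H t (or_intror Ht)).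
exists (Rmax N1 N2) => t [<-|Ht]; first by apply: Hm H1; apply: Rmax_l.
by apply: Hm (H2 t Ht); apply: Rmax_r.
Qed.

Lemma mat_unif_nat m (P : 'I_m -> 'I_m -> nat -> Prop) :
  (forall i j a b, (a <= b)%coq_nat -> P i j a -> P i j b) ->
  (forall i j, exists N, P i j N) -> exists N, forall i j, P i j N.
Proof.
move=> Hm H.
have H1 : forall i, exists N, forall j, P i j N.
  move=> i; have [N HN] := @fin_unif_nat _ (enum 'I_m) (P i) (Hm i) (fun j _ => H i j).
  by exists N => j; apply: HN; exact: In_enum.
have [N HN] := @fin_unif_nat _ (enum 'I_m) (fun i N => forall j, P i j N)
  (fun i a b Hab Ha j => Hm i j a b Hab (Ha j)) (fun i _ => H1 i).
by exists N => i j; apply: HN; exact: In_enum.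
Qed.

Lemma mat_unif_R m (P : 'I_m -> 'I_m -> R -> Prop) :
  (forall i j a b, a <= b -> P i j a -> P i j b) ->
  (forall i j, exists N, P i j N) -> exists N, forall i j, P i j N.
Proof.
move=> Hm H.
have H1 : forall i, exists N, forall j, P i j N.
  move=> i; have [N HN] := @fin_unif_R _ (enum 'I_m) (P i) (Hm i) (fun j _ => H i j).
  by exists N => j; apply: HN; exact: In_enum.
have [N HN] := @fin_unif_R _ (enum 'I_m) (fun i N => forall j, P i j N)
  (fun i a b Hab Ha j => Hm i j a b Hab (Ha j)) (fun i _ => H1 i).
by exists N => i j; apply: HN; exact: In_enum.
Qed.

Definition close m (e : R) (X Y : Mat m) := forall i j,
  Rabs (fst (Y i j) - fst (X i j)) < e /\ Rabs (snd (Y i j) - snd (X i j)) < e.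

Lemma mat_cv_close m (u : nat -> Mat m) L : mat_cv u L ->
  forall e, 0 < e -> exists N, forall n, (N <= n)%coq_nat -> close e L (u n).
Proof.
move=> H e He.
have [N HN] : exists N, forall i j, forall n, (N <= n)%coq_nat ->
   Rabs (fst (u n i j) - fst (L i j)) < e /\ Rabs (snd (u n i j) - snd (L i j)) < e.
  apply: (@mat_unif_nat m (fun i j N => forall n, (N <= n)%coq_nat ->
   Rabs (fst (u n i j) - fst (L i j)) < e /\ Rabs (snd (u n i j) - snd (L i j)) < e)).
- move=> i j a b Hab Ha n Hn; apply: Ha; lia.
- move=> i j; have [H1 H2] := H i j.
  have [N1 HN1] := H1 e He; have [N2 HN2] := H2 e He.
  exists (Nat.max N1 N2) => n Hn; split; [apply: HN1 | apply: HN2]; lia.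
by exists N => n Hn i j; apply: HN.
Qed.

Lemma close_cv m (u : nat -> Mat m) L :
  (forall e, 0 < e -> exists N, forall n, (N <= n)%coq_nat -> close e L (u n)) -> mat_cv u L.
Proof.
move=> H i j; split => e He; have [N HN] := H e He; exists N => n Hn;
  rewrite /R_dist; have := HN n Hn i j; case => //.
Qed.

Lemma mat_cv_sub m (u : nat -> Mat m) L f : incr f -> mat_cv u L -> mat_cv (fun n => u (f n)) L.
Proof. move=> Hf H i j; have [H1 H2] := H i j; split.
  exact: (cv_sub (u := fun n => fst (u n i j)) Hf H1).
exact: (cv_sub (u := fun n => snd (u n i j)) Hf H2). Qed.

Lemma mat_cv_unique m (u : nat -> Mat m) L1 L2 : mat_cv u L1 -> mat_cv u L2 -> L1 = L2.
Proof.
move=> H1 H2; apply: functional_extensionality => i; apply: functional_extensionality => j.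
have [A1 B1] := H1 i j; have [A2 B2] := H2 i j.
have E1 := UL_sequence _ _ _ A1 A2; have E2 := UL_sequence _ _ _ B1 B2.
by move: E1 E2; case: (L1 i j) => a b; case: (L2 i j) => c d /= -> ->.
Qed.

Lemma cv_const (c : R) : Un_cv (fun _ => c) c.
Proof. move=> e He; exists 0%nat => n _; rewrite /R_dist Rminus_diag Rabs_R0; lra. Qed.

Lemma mmul_cv m (u v : nat -> Mat m) L M : mat_cv u L -> mat_cv v M ->
  mat_cv (fun n => mmul (u n) (v n)) (mmul L M).
Proof.
move=> Hu Hv i j; rewrite /mmul.
elim: (enum 'I_m) => [|k s [IH1 IH2]]; first by split; apply: cv_const.
have [A1 A2] := Hu i k; have [B1 B2] := Hv k j.
split => /=.
- apply: CV_plus => //; apply: CV_minus; exact: CV_mult.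
- apply: CV_plus => //; apply: CV_plus; exact: CV_mult.
Qed.


Lemma Rabs_le_inv' x K : Rabs x <= K -> -K <= x <= K.
Proof. move=> H; split; [have := Rle_abs (-x); rewrite Rabs_Ropp; lra | have := Rle_abs x; lra]. Qed.

Lemma bw1 (u : nat -> R) K : (forall n, Rabs (u n) <= K) ->
  exists f l, incr f /\ Un_cv (fun n => u (f n)) l.
Proof.
move=> HK.
have [l Hl] := Bolzano_Weierstrass u (fun c => -K <= c <= K) (compact_P3 _ _)
  (fun n => @Rabs_le_inv' _ _ (HK n)).
have Hsel : forall n N, {p | (N <= p)%coq_nat /\ Rabs (u p - l) < / INR (S n)}.
  move=> n N; apply: constructive_indefinite_description.
  have Hp : 0 < / INR (S n) by apply: Rinv_0_lt_compat; apply: lt_0_INR; lia.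
  have [p [Hp1 Hp2]] := Hl (disc l (mkposreal _ Hp)) N
    (ex_intro _ (mkposreal _ Hp) (fun y Hy => Hy)).
  by exists p; split.
pose f := fix f n := match n with
  | O => proj1_sig (Hsel O O)
  | S n' => proj1_sig (Hsel (S n') (S (f n'))) end.
exists f, l; split.
  move=> n /=; case: (Hsel (S n) (S (f n))) => p /= [H1 _]; lia.
move=> e He; have [N [HN1 HN2]] := archimed_cor1 e He; exists N => n Hn.
rewrite /R_dist.
have Hb : Rabs (u (f n) - l) < / INR (S n).
  by case: n {Hn} => [|n] /=; [case: (Hsel 0%nat 0%nat) => p /= [_ H] | case: (Hsel (S n) (S (f n))) => p /= [_ H]].
apply: Rlt_le_trans Hb _; apply: Rle_trans (Rlt_le _ _ HN1).
apply: Rinv_le_contravar; first by apply: lt_0_INR; lia.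
by apply: le_INR; lia.
Qed.


Lemma bw_list m (cs : list (Mat m -> R)) (u : nat -> Mat m) K :
  (forall n c, In c cs -> Rabs (c (u n)) <= K) ->
  exists f, incr f /\ forall c, In c cs -> exists l, Un_cv (fun n => c (u (f n))) l.
Proof.
elim: cs => [|c cs IH] H.
  by exists (fun n => n); split => // n; lia.
have [f1 [Hf1 H1]] := IH (fun n c' Hc' => H n c' (or_intror Hc')).
have [f2 [l [Hf2 Hl]]] := @bw1 (fun n => c (u (f1 n))) K (fun n => H _ c (or_introl erefl)).
exists (fun n => f1 (f2 n)); split; first exact: incr_comp.
move=> c' [<-|Hc']; first by exists l.
have [l' Hl'] := H1 c' Hc'; exists l'.
exact: (cv_sub (u := fun n => c' (u (f1 n))) Hf2 Hl').
Qed.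

Definition coords m : list (Mat m -> R) :=
  flat_map (fun i => flat_map (fun j => (fun X : Mat m => fst (X i j)) :: (fun X : Mat m => snd (X i j)) :: nil)
    (enum 'I_m)) (enum 'I_m).

Lemma coords_fst m (i j : 'I_m) : In (fun X : Mat m => fst (X i j)) (coords m).
Proof.
apply/in_flat_map; exists i; split; first exact: In_enum.
apply/in_flat_map; exists j; split; [exact: In_enum | by left].
Qed.

Lemma coords_snd m (i j : 'I_m) : In (fun X : Mat m => snd (X i j)) (coords m).
Proof.
apply/in_flat_map; exists i; split; first exact: In_enum.
apply/in_flat_map; exists j; split; [exact: In_enum | by right; left].
Qed.

Lemma bw_mat m (u : nat -> Mat m) K : ebnd u K ->
  exists f L, incr f /\ mat_cv (fun n => u (f n)) L.
Proof.
move=> HK.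
have HB : forall n c, In c (coords m) -> Rabs (c (u n)) <= K.
  move=> n c /in_flat_map [i [_ /in_flat_map [j [_ Hc]]]].
  by case: Hc => [<-|[<-|[]]]; case: (HK n i j).
have [f [Hf H]] := @bw_list m (coords m) u K HB.
have H1 : forall i j, {l | Un_cv (fun n => fst (u (f n) i j)) l}.
  move=> i j; apply: constructive_indefinite_description; exact: (H _ (coords_fst i j)).
have H2 : forall i j, {l | Un_cv (fun n => snd (u (f n) i j)) l}.
  move=> i j; apply: constructive_indefinite_description; exact: (H _ (coords_snd i j)).
exists f, (fun i j => (proj1_sig (H1 i j), proj1_sig (H2 i j))); split => // i j /=.
by split; [case: (H1 i j) | case: (H2 i j)].
Qed.


Lemma close_sym m e (X Y : Mat m) : close e X Y -> close e Y X.
Proof. move=> H i j; have [H1 H2] := H i j; by rewrite Rabs_minus_sym (Rabs_minus_sym (snd _)). Qed.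

Lemma close_trans m e1 e2 (X Y Z : Mat m) : close e1 X Y -> close e2 Y Z -> close (e1 + e2) X Z.
Proof.
move=> H1 H2 i j; have [A1 B1] := H1 i j; have [A2 B2] := H2 i j.
have T1 := Rabs_triang (fst (Z i j) - fst (Y i j)) (fst (Y i j) - fst (X i j)).
have T2 := Rabs_triang (snd (Z i j) - snd (Y i j)) (snd (Y i j) - snd (X i j)).
have E1 : fst (Z i j) - fst (Y i j) + (fst (Y i j) - fst (X i j)) = fst (Z i j) - fst (X i j) by lra.
have E2 : snd (Z i j) - snd (Y i j) + (snd (Y i j) - snd (X i j)) = snd (Z i j) - snd (X i j) by lra.
rewrite E1 in T1; rewrite E2 in T2; split; lra.
Qed.

Lemma close_mono m e1 e2 (X Y : Mat m) : e1 <= e2 -> close e1 X Y -> close e2 X Y.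
Proof. move=> He H i j; have [H1 H2] := H i j; split; lra. Qed.

Lemma G_bnd m (A : Mat m) K X : ebnd (mpow A) K -> limit_points A X ->
  forall i j, Rabs (fst (X i j)) <= K /\ Rabs (snd (X i j)) <= K.
Proof.
move=> HK [phi [Hphi Hcv]] i j; have [H1 H2] := Hcv i j; split.
  by apply: (cv_le_bnd H1) => n; case: (HK (phi n) i j).
by apply: (cv_le_bnd H2) => n; case: (HK (phi n) i j).
Qed.

Lemma G_mul m (A : Mat m) X Y : limit_points A X -> limit_points A Y ->
  limit_points A (mmul X Y).
Proof.
move=> [phi [Hphi Hx]] [psi [Hpsi Hy]]; exists (fun n => (phi n + psi n)%nat); split.
  by move=> n; have := Hphi n; have := Hpsi n; rewrite /Nat.lt; lia.
have -> : (fun n => mpow A (phi n + psi n)) = (fun n => mmul (mpow A (phi n)) (mpow A (psi n))).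
  by apply: functional_extensionality => n; rewrite mpow_add.
exact: mmul_cv.
Qed.

Lemma G_comm m (A : Mat m) X Y : limit_points A X -> limit_points A Y ->
  mmul X Y = mmul Y X.
Proof.
move=> [phi [Hphi Hx]] [psi [Hpsi Hy]].
apply: (mat_cv_unique (mmul_cv Hx Hy)).
have -> : (fun n => mmul (mpow A (phi n)) (mpow A (psi n))) = (fun n => mmul (mpow A (psi n)) (mpow A (phi n))).
  by apply: functional_extensionality => n; rewrite -!mpow_add addnC.
exact: mmul_cv.
Qed.

Lemma incr_diff f : incr f -> forall a k, (f a + k <= f (a + k))%coq_nat.
Proof.
move=> Hf a; elim=> [|k IH]; first by rewrite Nat.add_0_r; lia.
have := Hf (a + k)%coq_nat; rewrite /Nat.lt -Nat.add_succ_r; lia.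
Qed.

Lemma G_div m (A : Mat m) K X Y : ebnd (mpow A) K -> limit_points A X -> limit_points A Y ->
  exists Z, limit_points A Z /\ mmul Z X = Y.
Proof.
move=> HK [phi [Hphi Hx]] [psi [Hpsi Hy]].
pose g n := (phi n + n)%coq_nat.
have Hg : incr g by move=> n; have := Hphi n; rewrite /g /Nat.lt; lia.
have Hge : forall n, (phi n <= psi (g n))%coq_nat.
  move=> n; have := incr_ge Hpsi (g n); rewrite /g; lia.
pose d n := (psi (g n) - phi n)%coq_nat.
have Hd : incr d.
  move=> n; rewrite /d /Nat.lt.
  have H1 := incr_diff Hpsi (g n) (phi (S n) - phi n + 1)%coq_nat.
  have H2 := Hphi n; have H3 := Hge n; have H4 := Hge (S n).
  have E : (g n + (phi (S n) - phi n + 1) = g (S n))%coq_nat by rewrite /g; rewrite /Nat.lt in H2; lia.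
  rewrite E in H1; rewrite /Nat.lt in H2; lia.
have [h [Z [Hh HZ]]] := @bw_mat m (fun n => mpow A (d n)) K (fun n => HK (d n)).
exists Z; split.
  by exists (fun n => d (h n)); split => //; exact: incr_comp.
apply: (mat_cv_unique _ (mat_cv_sub (incr_comp Hg Hh) Hy)).
have -> : (fun n => mpow A (psi (g (h n)))) = (fun n => mmul (mpow A (d (h n))) (mpow A (phi (h n)))).
  apply: functional_extensionality => n; rewrite -mpow_add; congr mpow.
  by have := Hge (h n); rewrite /d; lia.
exact: (mmul_cv HZ (mat_cv_sub (u := fun n => mpow A (phi n)) Hh Hx)).
Qed.


Lemma group_of m (G : Mat m -> Prop) X0 : G X0 ->
  (forall X Y, G X -> G Y -> G (mmul X Y)) ->
  (forall X Y, G X -> G Y -> mmul X Y = mmul Y X) ->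
  (forall X Y, G X -> G Y -> exists Z, G Z /\ mmul Z X = Y) ->
  abelian_group_mul G.
Proof.
move=> H0 Hmul Hcomm Hdiv; split => //; split; first by move=> *; exact: mmulA.
have [E [HE HEX0]] := Hdiv X0 X0 H0 H0.
have HEl : forall X, G X -> mmul E X = X.
  move=> X HX; have [Z [HZ HZX]] := Hdiv X0 X H0 HX.
  by rewrite -HZX mmulA (Hcomm E Z HE HZ) -mmulA HEX0.
exists E; split => //; split.
  by move=> X HX; split; [exact: HEl | rewrite Hcomm //; exact: HEl].
split => //.
move=> X HX; have [Z [HZ HZX]] := Hdiv X E HX HE.
by exists Z; split => //; split => //; rewrite Hcomm.
Qed.


Lemma G_seqc m (A : Mat m) K : ebnd (mpow A) K -> forall x : nat -> Mat m,
  (forall n, limit_points A (x n)) ->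
  exists f X, incr f /\ limit_points A X /\ mat_cv (fun n => x (f n)) X.
Proof.
move=> HK x Hx.
have [h [X [Hh HX]]] := @bw_mat m x K (fun n i j => G_bnd HK (Hx n) i j).
exists h, X; split => //; split => //.
have Phi : forall n, {phi | incr phi /\ mat_cv (fun k => mpow A (phi k)) (x (h n))}.
  move=> n; apply: constructive_indefinite_description; exact: (Hx (h n)).
have Sel : forall n p, {k | (p < proj1_sig (Phi n) k)%coq_nat /\
    close (/ INR (S n)) (x (h n)) (mpow A (proj1_sig (Phi n) k))}.
  move=> n p; apply: constructive_indefinite_description.
  case: (Phi n) => phi [Hphi Hcv] /=.
  have Hp : 0 < / INR (S n) by apply: Rinv_0_lt_compat; apply: lt_0_INR; lia.
  have [N HN] := mat_cv_close Hcv Hp.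
  exists (Nat.max N (S p)); split; last by apply: HN; lia.
  have := incr_ge Hphi (Nat.max N (S p)); lia.
pose e := fix e n := match n with
  | O => proj1_sig (Phi O) (proj1_sig (Sel O O))
  | S n' => proj1_sig (Phi (S n')) (proj1_sig (Sel (S n') (e n'))) end.
have He : forall n, close (/ INR (S n)) (x (h n)) (mpow A (e n)).
  by case=> [|n] /=; [case: (Sel 0%nat 0%nat) | case: (Sel (S n) (e n))] => k /= [_ H].
exists e; split.
  by move=> n /=; case: (Sel (S n) (e n)) => k /= [H _].
apply: close_cv => eps Heps.
have [N1 [HN1 HN1']] := archimed_cor1 (eps/2) ltac:(lra).
have [N2 HN2] := mat_cv_close HX (ltac:(lra) : 0 < eps/2).
exists (Nat.max N1 N2) => n Hn.
have H := close_trans (HN2 n ltac:(lia)) (He n).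
apply: close_mono H.
have : / INR (S n) <= / INR N1.
  apply: Rinv_le_contravar; first by apply: lt_0_INR; lia.
  by apply: le_INR; lia.
lra.
Qed.


Lemma seqc_compact m (K : Mat m -> Prop) :
  (forall x : nat -> Mat m, (forall n, K (x n)) ->
     exists f X, incr f /\ K X /\ mat_cv (fun n => x (f n)) X) -> mat_compact K.
Proof.
move=> Hs I U HU Hcov.
have [del [Hdel Hleb]] : exists del, 0 < del /\
    forall X, K X -> exists a, forall Y, close del X Y -> U a Y.
  apply: NNPP => Hn.
  have Hn' : forall n, exists X, K X /\
      forall a, exists Y, close (/ INR (S n)) X Y /\ ~ U a Y.
    move=> n; apply: NNPP => Hx; apply: Hn; exists (/ INR (S n)); split.
      by apply: Rinv_0_lt_compat; apply: lt_0_INR; lia.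
    move=> X HX; apply: NNPP => Ha; apply: Hx; exists X; split => // a.
    apply: NNPP => Hy; apply: Ha; exists a => Y HY; apply: NNPP => HU'; apply: Hy.
    by exists Y; split.
  have xs : forall n, {X | K X /\ forall a, exists Y, close (/ INR (S n)) X Y /\ ~ U a Y}.
    move=> n; exact: (constructive_indefinite_description _ (Hn' n)).
  have [f [X [Hf [HKX Hcv]]]] := Hs (fun n => proj1_sig (xs n)) (fun n => proj1 (proj2_sig (xs n))).
  have [a Ha] := Hcov X HKX.
  have [eps [Heps Hball]] := HU a X Ha.
  have [N1 [HN1 HN1']] := archimed_cor1 (eps/2) (ltac:(lra) : 0 < eps/2).
  have [N2 HN2] := mat_cv_close Hcv (ltac:(lra) : 0 < eps/2).
  pose n := Nat.max N1 N2.
  have [Y [HY HnU]] := proj2 (proj2_sig (xs (f n))) a.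
  apply: HnU; apply: Hball.
  have H := close_trans (HN2 n ltac:(lia)) HY.
  apply: (close_mono _ H).
  have : / INR (S (f n)) <= / INR N1.
    apply: Rinv_le_contravar; first by apply: lt_0_INR; lia.
    apply: le_INR; have := incr_ge Hf n; lia.
  lra.
have [l [HlK Hl]] : exists l : list (Mat m), (forall p, In p l -> K p) /\
    forall X, K X -> exists p, In p l /\ close del p X.
  apply: NNPP => Hn.
  have Hnx : forall l : list (Mat m), (forall p, In p l -> K p) ->
      exists X, K X /\ forall p, In p l -> ~ close del p X.
    move=> l HlK; apply: NNPP => Hx; apply: Hn; exists l; split => // X HX.
    apply: NNPP => Hp; apply: Hx; exists X; split => // p Hpl Hc; apply: Hp; by exists p.
  have Hnx' : forall l : list (Mat m), exists X, (forall p, In p l -> K p) ->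
      K X /\ forall p, In p l -> ~ close del p X.
    move=> l; case: (classic (forall p, In p l -> K p)) => Hl.
      by have [X HX] := Hnx l Hl; exists X.
    by exists (fun _ _ => C0).
  pose nxt l := proj1_sig (constructive_indefinite_description _ (Hnx' l)).
  have Hnxt : forall l, (forall p, In p l -> K p) ->
      K (nxt l) /\ forall p, In p l -> ~ close del p (nxt l).
    by move=> l; rewrite /nxt; case: (constructive_indefinite_description _ (Hnx' l)).
  pose Ls := fix Ls n := match n with O => nil | S n' => nxt (Ls n') :: Ls n' end.
  have HLs : forall n, (forall p, In p (Ls n) -> K p).
    elim=> [|n IH] p //= [<-|Hp]; last exact: IH.
    exact: (proj1 (Hnxt _ IH)).
  have Hx : forall n, K (nxt (Ls n)) /\ forall p, In p (Ls n) -> ~ close del p (nxt (Ls n)).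
    move=> n; exact: (Hnxt _ (HLs n)).
  have HinLs : forall k n, (k < n)%coq_nat -> In (nxt (Ls k)) (Ls n).
    move=> k; elim=> [|n IH] Hkn; first lia.
    case: (Nat.eq_dec k n) => [->|Hne]; [by left | right; apply: IH; lia].
  have [f [X [Hf [_ Hcv]]]] := Hs (fun n => nxt (Ls n)) (fun n => proj1 (Hx n)).
  have [N HN] := mat_cv_close Hcv (ltac:(lra) : 0 < del/2).
  apply: (proj2 (Hx (f (S N))) (nxt (Ls (f N)))).
    by apply: HinLs; exact: Hf.
  have H := close_trans (close_sym (HN N (le_n _))) (HN (S N) ltac:(lia)).
  apply: (close_mono _ H); lra.
have Hcoll : forall l', (forall p, In p l' -> K p) -> exists la : list I,
    forall p, In p l' -> exists a, In a la /\ forall Y, close del p Y -> U a Y.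
  elim=> [|p l' IH] Hl'; first by exists nil.
  have [la Hla] := IH (fun q Hq => Hl' q (or_intror Hq)).
  have [a Ha] := Hleb p (Hl' p (or_introl erefl)).
  exists (a :: la) => q [<-|Hq]; first by exists a; split => //; left.
  by have [b [Hb1 Hb2]] := Hla q Hq; exists b; split => //; right.
have [la Hla] := Hcoll l HlK.
exists la => X HX.
have [p [Hp Hc]] := Hl X HX.
have [a [Ha1 Ha2]] := Hla p Hp.
by exists a; split => //; exact: Ha2.
Qed.

End W3.

End W3.
Import W3.

Theorem mainTheorem13 (m : nat) (A : Mat m) :
  (exists L, limit_points A L) ->
  mat_compact (limit_points A) /\ abelian_group_mul (limit_points A).
Proof.
move=> [L0 HL0].
have [K HK] : exists K, ebnd (mpow A) K.
  have [phi [Hphi Hcv]] := HL0.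
  apply: (@bnd_bridge m A phi); first by move=> n; apply/ltP; exact: Hphi.
  have [Kr HKr] : exists Kr, forall i j, forall n,
      Rle (Rabs (fst (mpow A (phi n) i j))) Kr /\ Rle (Rabs (snd (mpow A (phi n) i j))) Kr.
    apply: (@mat_unif_R m (fun i j K => forall n,
      Rle (Rabs (fst (mpow A (phi n) i j))) K /\ Rle (Rabs (snd (mpow A (phi n) i j))) K)).
  - move=> i j a b Hab Ha n; have [H1 H2] := Ha n; split; lra.
  - move=> i j; have [H1 H2] := Hcv i j.
    have [K1 HK1] := cv_bnd H1; have [K2 HK2] := cv_bnd H2.
    exists (Rmax K1 K2) => n; split.
      exact: Rle_trans (HK1 n) (Rmax_l _ _).
    exact: Rle_trans (HK2 n) (Rmax_r _ _).
  by exists Kr => n i j; exact: HKr.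
split.
  apply: seqc_compact; exact: G_seqc HK.
apply: (@group_of m (limit_points A) L0 HL0).
- move=> X Y; exact: G_mul.
- move=> X Y; exact: G_comm.
- move=> X Y; exact: G_div HK.
Qed.
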